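(* Let $\mathfrak q:\mathbb R^n\to\mathbb R$ be a non-degenerate quadratic form with rational coefficients, $\mathfrak Q_{\mathfrak q}=\{\bar x:\mathfrak q(\bar x)=1\}$, and let $\psi$ be an approximating function with $\lim_{x\to\infty}x\psi(x)=0$. Let $\bar x\in\mathfrak Q_{\mathfrak q}$ and let $\frac1q\bar p\in\mathbb Q^n$ satisfy $\|\bar x-\frac1q\bar p\|\le\frac{\psi(q)}{q}$. If $q$ is large enough, then $\frac1q\bar p\in\mathfrak Q_{\mathfrak q}$.
   Context: $\|\cdot\|$ is the max-norm. An approximating function is a decreasing $\psi:\mathbb R_+\to\mathbb R_+$ with $\psi(x)\to0$ as $x\to\infty$. Rational vectors are written $\frac1q\bar p$ with $q\in\mathbb N$, $\bar p\in\mathbb Z^n$, $\gcd(q,p_1,\dots,p_n)=1$. *)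

(* Defs.v *)
From HB Require Import structures.
From mathcomp Require Import all_boot all_order all_algebra.
From mathcomp Require Import all_classical all_reals all_analysis.
Set Implicit Arguments. Unset Strict Implicit. Unset Printing Implicit Defensive.
Import Order.TTheory GRing.Theory Num.Theory.
Import numFieldNormedType.Exports.
Local Open Scope classical_set_scope.
Local Open Scope ring_scope.

Definition maxnorm (R : realType) (n : nat) (v : 'rV[R]_n) : R :=
  \big[Num.max/0]_(i < n) `|v ord0 i|.

Definition qform (R : realType) (n : nat) (A : 'M[rat]_n) (x : 'rV[R]_n) : R :=
  \sum_(i < n) \sum_(j < n) ratr (A i j) * x ord0 i * x ord0 j.

Definition nondegenerate_qf (n : nat) (A : 'M[rat]_n) : Prop :=
  A^T = A /\ \det A != 0.

Definition approximating_function (R : realType) (psi : R -> R) : Prop :=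
  (forall x y : R, 0 <= x -> x <= y -> psi y <= psi x) /\
  (forall x : R, 0 <= x -> 0 <= psi x) /\
  (psi x @[x --> +oo] --> (0 : R)).

Definition ratvec (R : realType) (n : nat) (q : nat) (p : 'rV[int]_n) : 'rV[R]_n :=
  \row_(i < n) ((p ord0 i)%:~R / q%:R).

Definition reduced (n : nat) (q : nat) (p : 'rV[int]_n) : bool :=
  (\big[gcdn/q]_(i < n) `|p ord0 i|%N == 1)%N.

(* Main.v *)
Require Import Defs.
From HB Require Import structures.
From mathcomp Require Import all_boot all_order all_algebra.
From mathcomp Require Import all_classical all_reals all_analysis.
From mathcomp Require Import ring lra.
Import Order.TTheory GRing.Theory Num.Theory.
Import numFieldNormedType.Exports.
Local Open Scope classical_set_scope.
Local Open Scope ring_scope.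

Lemma common_den (s : seq rat) :
  exists D : nat, (0 < D)%N /\ forall r, r \in s -> exists z : int, r * D%:R = z%:~R.
Proof.
elim: s => [|r s [D [D0 HD]]]; first by exists 1%N.
have hd : (`|denq r|%N)%:R = (denq r)%:~R :> rat by rewrite -[in RHS]absz_denq.
exists (D * `|denq r|)%N; split.
  by rewrite muln_gt0 D0 absz_gt0 denq_neq0.
move=> r'; rewrite inE => /orP [/eqP ->|/HD [z hz]].
  exists (numq r * D%:Z); rewrite natrM hd mulrCA -numqE intrM mulrC.
  by [].
exists (z * denq r); rewrite natrM hd mulrA hz intrM.
by [].
Qed.

Lemma diff_bound (R : realFieldType) (a b c e M d : R) :
  `|b| <= M -> `|c| <= M -> `|a - c| <= d -> `|b - e| <= d ->
  `|a * b - c * e| <= 2 * M * d.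
Proof.
move=> hb hc hac hbe.
have -> : a * b - c * e = (a - c) * b + c * (b - e) by ring.
apply: (le_trans (ler_normD _ _)); rewrite !normrM.
have d0 : 0 <= d by apply: le_trans hac.
have h1 : `|a - c| * `|b| <= d * M by apply: ler_pM.
have h2 : `|c| * `|b - e| <= M * d by apply: ler_pM.
lra.
Qed.

Lemma maxnorm_ge (R : realType) n (v : 'rV[R]_n) i : `|v ord0 i| <= maxnorm v.
Proof. rewrite /maxnorm; exact: le_bigmax. Qed.

Lemma maxnorm_ge0 (R : realType) n (v : 'rV[R]_n) : 0 <= maxnorm v.
Proof. exact: bigmax_ge_id. Qed.

Lemma qform_diff (R : realType) n (A : 'M[rat]_n) (x y : 'rV[R]_n) M d :
  (forall i, `|x ord0 i| <= M) -> (forall i, `|y ord0 i| <= M) ->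
  (forall i, `|x ord0 i - y ord0 i| <= d) ->
  `|qform A x - qform A y| <= 2 * M * d * \sum_i \sum_j `|ratr (A i j) : R|.
Proof.
move=> hx hy hd; rewrite /qform -sumrB.
apply: (le_trans (ler_norm_sum _ _ _)); rewrite mulr_sumr; apply: ler_sum => i _.
rewrite -sumrB; apply: (le_trans (ler_norm_sum _ _ _)); rewrite mulr_sumr.
apply: ler_sum => j _.
have -> : ratr (A i j) * x ord0 i * x ord0 j - ratr (A i j) * y ord0 i * y ord0 j
  = ratr (A i j) * (x ord0 i * x ord0 j - y ord0 i * y ord0 j) by ring.
rewrite normrM mulrC; apply: ler_wpM2r => //.
exact: diff_bound.
Qed.

Lemma qform_int (R : realType) n (A : 'M[rat]_n) (D q : nat) (p : 'rV[int]_n) :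
  (q != 0)%N -> (forall i j, (ratr (A i j) * D%:R : R) \is a Num.int) ->
  qform A (ratvec R q p) * (D%:R * q%:R ^+ 2) \is a Num.int.
Proof.
move=> q0 hA; rewrite /qform mulr_suml; apply: rpred_sum => i _.
rewrite mulr_suml; apply: rpred_sum => j _.
have qn : q%:R != 0 :> R by rewrite pnatr_eq0.
have -> : ratr (A i j) * ratvec R q p ord0 i * ratvec R q p ord0 j * (D%:R * q%:R ^+ 2)
   = (ratr (A i j) * D%:R) * (p ord0 i)%:~R * (p ord0 j)%:~R.
  rewrite /ratvec !mxE; field; exact: qn.
by apply: rpredM; [apply: rpredM; [exact: hA | exact: intr_int] | exact: intr_int].
Qed.

Theorem lemma4p1 (R : realType) (n : nat) (A : 'M[rat]_n) (psi : R -> R) :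
  nondegenerate_qf A ->
  approximating_function psi ->
  (x * psi x @[x --> +oo] --> (0 : R)) ->
  forall x : 'rV[R]_n, qform A x = 1 ->
  exists Q0 : nat, forall (q : nat) (p : 'rV[int]_n),
    (Q0 <= q)%N -> (0 < q)%N -> reduced q p ->
    maxnorm (x - ratvec R q p) <= psi q%:R / q%:R ->
    qform A (ratvec R q p) = 1.
Proof.
move=> _ _ hlim x hx.
have [D [D0 HD]] := common_den [seq A ij.1 ij.2 | ij <- enum {: 'I_n * 'I_n}].
have hA : forall i j, (ratr (A i j) * D%:R : R) \is a Num.int.
  move=> i j.
  have hij : (i, j) \in enum {: 'I_n * 'I_n} by rewrite mem_enum.
  have [z hz] := HD _ (map_f (fun ij : 'I_n * 'I_n => A ij.1 ij.2) hij).
  rewrite -(rmorph_nat (@ratr R)) -rmorphM /= hz rmorph_int.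
  exact: intr_int.
pose S := \sum_i \sum_j `|ratr (A i j) : R|.
have S0 : 0 <= S by apply: sumr_ge0 => i _; apply: sumr_ge0.
pose M := maxnorm x + 1.
have M0 : 1 <= M by have := @maxnorm_ge0 _ _ x; rewrite /M; lra.
pose C := 2 * M * S * D%:R.
have C0 : 0 <= C by rewrite /C !mulr_ge0 //; lra.
pose e := (C + 1)^-1.
have e0 : 0 < e by rewrite /e invr_gt0; lra.
have hCe : C * e < 1.
  rewrite /e ltr_pdivrMr; lra.
have he1 : e <= 1 by rewrite /e invf_le1; lra.
have [M1 [M1r HM1]] := cvgr0_norm_lt _ hlim _ e0.
exists (Num.trunc M1).+1 => q p hq q0 _ hd.
pose t := q%:R : R.
have t1 : 1 <= t by rewrite /t ler1n.
have ht : M1 < t.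
  apply: (lt_le_trans (truncnS_gt M1)); by rewrite /t ler_nat.
have h1 : `|t * psi t| < e by exact: (HM1 t ht).
pose u := psi t / t.
have psiE : psi t = u * t by rewrite /u divfK //; lra.
have hu : `|u| * (t * t) < e.
  move: h1; rewrite psiE normrM (ger0_norm (_ : 0 <= t)); last lra.
  rewrite normrM (ger0_norm (_ : 0 <= t)); last lra.
  by rewrite mulrC -mulrA.
have hu0 : 0 <= `|u| := normr_ge0 u.
have huu : u <= `|u| := ler_norm u.
have htt : 1 <= t * t by nra.
have hue : `|u| <= e.
  apply: le_trans (ltW hu); rewrite -[X in X <= _]mulr1; apply: ler_wpM2l => //.
pose y := ratvec R q p.
pose d := maxnorm (x - y).
have hdu : d <= u by [].
have hd1 : d <= 1 by lra.
have hxy i : `|x ord0 i - y ord0 i| <= d.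
  by have := @maxnorm_ge _ _ (x - y) i; rewrite !mxE.
have hxM i : `|x ord0 i| <= M.
  by have := @maxnorm_ge _ _ x i; rewrite /M; lra.
have hyM i : `|y ord0 i| <= M.
  have -> : y ord0 i = x ord0 i - (x ord0 i - y ord0 i) by ring.
  have := ler_normB (x ord0 i) (x ord0 i - y ord0 i).
  have := hxy i; have := @maxnorm_ge _ _ x i; rewrite /M; lra.
have key := @qform_diff _ _ A x y _ _ hxM hyM hxy.
rewrite hx -/S in key.
apply/eqP; apply/negPn/negP => hne.
have qn0 : (q != 0)%N by rewrite -lt0n.
have hint := @qform_int R _ A D q p qn0 hA.
rewrite -/t -/y in hint.
pose K := D%:R * t ^+ 2.
have K0 : 0 < K by rewrite /K mulr_gt0 // ?ltr0n // exprn_gt0 //; lra.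
have hk : (qform A y - 1) * K \is a Num.int.
  rewrite mulrBl mul1r rpredB //; apply: rpredM; first exact: natr_int.
  by apply: rpredX; exact: natr_int.
have hk0 : (qform A y - 1) * K != 0.
  by rewrite mulf_neq0 ?subr_eq0 // gt_eqF.
have := norm_intr_ge1 hk hk0.
rewrite normrM (gtr0_norm K0) distrC.
have s1 : `|1 - qform A y| * K <= 2 * M * d * S * K by apply: ler_wpM2r => //; lra.
have s2 : 2 * M * d * S * K = C * (d * (t * t)) by rewrite /C /K; ring.
have s3 : d * (t * t) <= `|u| * (t * t) by apply: ler_wpM2r => //; lra.
have s4 : C * (d * (t * t)) <= C * e.
  apply: ler_wpM2l => //; lra.
lra.
Qed.
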